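(* The map sending a lineage $\mathcal{L}$ to its hierarchical generator $(\mathcal{B}^0\cup\mathrm{ch}(\mathcal{L}))\setminus\mathcal{L}$ is injective: if two lineages $\mathcal{L},\bar{\mathcal{L}}$ have the same hierarchical generator, then $\mathcal{L}=\bar{\mathcal{L}}$ (and their sets $\mathcal{B}^0\cup\mathrm{ch}(\mathcal{L})$, $\mathcal{B}^0\cup\mathrm{ch}(\bar{\mathcal{L}})$ coincide).
   Context: Fix integers $d\ge1$, $n\ge2$, $m\ge2$; $s=n-1$, $p=m-1$. B-splines $\varphi^\ell_{\vec i}(\vec x)=\prod_kQ(n^\ell x_k-i_k)$ for $\ell\in\mathbb{Z}_{\ge0}$, $\vec i\in\mathbb{Z}^d$, with $Q$ the uniform B-spline of order $m$ with knots $0,\dots,m$; $\mathfrak{B}$ is the set of all of them. $\mathcal{B}^0=\{\varphi^0_{\vec i}:\vec i\in[-p:0]^d\}$. Children: $\mathrm{ch}(\varphi^\ell_{\vec i})=\{\varphi^{\ell+1}_{\vec k}:n\vec i\le\vec k\le n\vec i+sm\}$ (componentwise), $\mathrm{ch}(\mathcal{F})=\bigcup_{\varphi\in\mathcal{F}}\mathrm{ch}(\varphi)$. A lineage is a finite set $\mathcal{L}\subset\mathfrak{B}$ with $\mathcal{L}\subset\mathcal{B}^0\cup\mathrm{ch}(\mathcal{L})$; its hierarchical generator is $(\mathcal{B}^0\cup\mathrm{ch}(\mathcal{L}))\setminus\mathcal{L}$. *)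

(* Defs.v *)
From HB Require Import structures.
From mathcomp Require Import all_boot all_order all_algebra.
Set Implicit Arguments. Unset Strict Implicit. Unset Printing Implicit Defensive.
Import Order.TTheory GRing.Theory Num.Theory.

(* A B-spline phi^l_i (l : nat, i : Z^d) is represented by its index (l, i).
   The map (l,i) |-> phi^l_i is injective (distinct supports), so sets of
   B-splines correspond exactly to sets of indices. *)
Definition bspl (d : nat) : Type := (nat * {ffun 'I_d -> int})%type.

Definition B0 (d m : nat) (b : bspl d) : Prop :=
  b.1 = 0%N /\ forall k : 'I_d, (- (m.-1)%:Z <= b.2 k)%R /\ (b.2 k <= 0)%R.

Definition is_child (d n m : nat) (b c : bspl d) : Prop :=
  c.1 = b.1.+1 /\
  forall k : 'I_d, (n%:Z * b.2 k <= c.2 k)%R /\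
                   (c.2 k <= n%:Z * b.2 k + ((n.-1) * m)%N%:Z)%R.

Definition ch (d n m : nat) (F : bspl d -> Prop) (c : bspl d) : Prop :=
  exists b, F b /\ is_child n m b c.

Definition finite_set (d : nat) (F : bspl d -> Prop) : Prop :=
  exists s : seq (bspl d), forall b, F b <-> b \in s.

Definition lineage (d n m : nat) (L : bspl d -> Prop) : Prop :=
  finite_set L /\ forall b, L b -> B0 m b \/ ch n m L b.

Definition B0ch (d n m : nat) (L : bspl d -> Prop) (b : bspl d) : Prop :=
  B0 m b \/ ch n m L b.

Definition hgen (d n m : nat) (L : bspl d -> Prop) (b : bspl d) : Prop :=
  B0ch n m L b /\ ~ L b.

(* Main.v *)
Require Import Defs.
From HB Require Import structures.
From mathcomp Require Import all_boot all_order all_algebra.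
From Stdlib Require Import Classical_Prop.

Lemma B0ch_ext (d n m : nat) (L L' : bspl d -> Prop) (b : bspl d) :
  (forall c, c.1.+1 = b.1 -> (L c <-> L' c)) -> (B0ch n m L b <-> B0ch n m L' b).
Proof.
move=> H; rewrite /B0ch /ch; split=> -[h|[c [Lc hc]]]; try by left.
- right; exists c; split=> //; apply/(H c); [by case: hc => ->|done].
- right; exists c; split=> //; apply/(H c); [by case: hc => ->|done].
Qed.

Lemma L_char (d n m : nat) (L : bspl d -> Prop) (b : bspl d) :
  lineage n m L -> (L b <-> B0ch n m L b /\ ~ hgen n m L b).
Proof.
move=> [_ HL]; split.
- move=> Lb; split; first exact: HL.
  by case.
- move=> [h1 h2]; apply: Classical_Prop.NNPP => nL; apply: h2; by split.
Qed.

Theorem lemma4p3 (d n m : nat) (hd : (1 <= d)%N) (hn : (2 <= n)%N) (hm : (2 <= m)%N)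
  (L L' : bspl d -> Prop) :
  lineage n m L -> lineage n m L' ->
  (forall b, hgen n m L b <-> hgen n m L' b) ->
  (forall b, L b <-> L' b) /\ (forall b, B0ch n m L b <-> B0ch n m L' b).
Proof.
move=> lL lL' Hg.
have key : forall l b, b.1 = l -> (L b <-> L' b) /\ (B0ch n m L b <-> B0ch n m L' b).
  elim=> [|l IH] b hb.
  - have HB : B0ch n m L b <-> B0ch n m L' b.
      by apply: B0ch_ext => c; rewrite hb.
    split=> //.
    split=> h.
    + by apply/(L_char _ _ _ _ b lL'); move/(L_char _ _ _ _ b lL): h => [h1 h2]; split; [apply/HB|rewrite -Hg].
    + by apply/(L_char _ _ _ _ b lL); move/(L_char _ _ _ _ b lL'): h => [h1 h2]; split; [apply/HB|rewrite Hg].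
  - have HB : B0ch n m L b <-> B0ch n m L' b.
      apply: B0ch_ext => c hc; rewrite hb in hc; case: hc => hc; exact: (IH c hc).1.
    split=> //.
    split=> h.
    + by apply/(L_char _ _ _ _ b lL'); move/(L_char _ _ _ _ b lL): h => [h1 h2]; split; [apply/HB|rewrite -Hg].
    + by apply/(L_char _ _ _ _ b lL); move/(L_char _ _ _ _ b lL'): h => [h1 h2]; split; [apply/HB|rewrite Hg].
by split=> b; case: (key b.1 b erefl).
Qed.
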